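(* (i) $(1,2;3,4)\sim(1,2;4,3)$. (ii) $(1,2;3,4;5)\sim(1,2;4,3;5)\sim(1,2;4,5;3)\sim(1,2;5,4;3)$. (iii) $(1,2;3,5;4)\sim(1,2;5,3;4)$.
   Context: A partially ordered pattern (POP) $p$ of size $k$ is a partial order $\le_p$ on $[k]$. A permutation $\pi=\pi_1\cdots\pi_n$ contains $p$ if there are indices $i_1<\dots<i_k$ with $\pi_{i_j}<\pi_{i_m}$ whenever $j<_p m$; otherwise it avoids $p$. $p\sim q$ (Wilf-equivalence) means the numbers of permutations of $[n]$ avoiding $p$ and avoiding $q$ coincide for all $n\ge1$. Notation: $(a,b;c,d)$ denotes the POP of size $4$ on $\{a,b,c,d\}=[4]$ whose only relations are $b<a$ and $d<c$; $(a,b;c,d;e)$ denotes the POP of size $5$ on $\{a,b,c,d,e\}=[5]$ whose only relations are $b<a$ and $d<c$ (so $e$ is isolated). *)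

(* Defs.v *)
From mathcomp Require Import all_boot all_order all_fingroup.
Set Implicit Arguments. Unset Strict Implicit. Unset Printing Implicit Defensive.

(* A partially ordered pattern of size k: the strict order relation <_p on
   positions, given as a boolean relation on 'I_k (position j : 'I_k stands
   for the element j+1 of [k]). *)
Definition pop (k : nat) := rel 'I_k.

(* The POP on [k] generated by a list of pairs (x, y) of 1-based positions,
   each meaning x <_p y.  The lists used below are already transitively
   closed (disjoint chains of length 2), so this is exactly the order. *)
Definition pop_of (k : nat) (rels : seq (nat * nat)) : pop k :=
  fun j m => (j.+1, m.+1) \in rels.

(* (a,b;c,d): size 4, only relations b < a and d < c. *)
Definition pop4 (a b c d : nat) : pop 4 := @pop_of 4 [:: (b, a); (d, c)].
(* (a,b;c,d;e): size 5, only relations b < a and d < c (e isolated). *)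
Definition pop5 (a b c d e : nat) : pop 5 := @pop_of 5 [:: (b, a); (d, c)].

Definition contains (k n : nat) (p : pop k) (pi : 'S_n) : bool :=
  [exists f : {ffun 'I_k -> 'I_n},
     [forall j : 'I_k, forall m : 'I_k,
        ((j < m)%N ==> (f j < f m)%N) && (p j m ==> (pi (f j) < pi (f m))%N)]].

Definition avoids (k n : nat) (p : pop k) (pi : 'S_n) : bool := ~~ contains p pi.

Definition num_avoiders (k : nat) (p : pop k) (n : nat) : nat :=
  #|[set pi : 'S_n | avoids p pi]|.

Definition wilf_equiv (k l : nat) (p : pop k) (q : pop l) : Prop :=
  forall n : nat, (1 <= n)%N -> num_avoiders p n = num_avoiders q n.

(* Main.v *)
Require Import Defs.
From mathcomp Require Import all_boot all_order all_fingroup zify.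
Set Implicit Arguments. Unset Strict Implicit. Unset Printing Implicit Defensive.

Section Frame.
Variable n : nat.

Definition bad (s : 'S_n) (j : nat) : bool :=
  [exists i : 'I_n, exists j' : 'I_n, [&& val j' == j, i < j' & s j' < s i]].

Definition tt (s : 'S_n) := find (bad s) (iota 0 n).

Lemma tt_le s : tt s <= n.
Proof. by rewrite /tt -[X in _ <= X](size_iota 0 n) find_size. Qed.

Lemma tt_min s j : bad s j -> tt s <= j.
Proof.
move=> Hb; rewrite leqNgt; apply/negP => Hlt.
have := before_find 0 Hlt. rewrite nth_iota ?add0n ?Hb //.
by apply: leq_trans Hlt (tt_le s).
Qed.

Lemma tt_bad s : tt s < n -> bad s (tt s).
Proof.
move=> H. have Hh : has (bad s) (iota 0 n) by rewrite has_find size_iota; exact: H.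
have := nth_find 0 Hh. by rewrite -/(tt s) nth_iota ?add0n.
Qed.

Lemma bad_lt s j : bad s j -> j < n.
Proof. rewrite /bad => /existsP [i /existsP [jj /and3P [/eqP <- _ _]]]; exact: ltn_ord. Qed.

Lemma tt_prefix (s s' : 'S_n) : (forall j : 'I_n, j <= tt s -> s' j = s j) -> tt s' = tt s.
Proof.
move=> E.
have Eb : forall j, j <= tt s -> bad s' j = bad s j.
  move=> j Hj; apply/existsP/existsP => [] [i /existsP [j' /and3P [/eqP Hv Hij Hs]]];
  exists i; apply/existsP; exists j'; rewrite Hv eqxx Hij /=;
  (have Ej' : j' <= tt s by rewrite Hv);
  (have Ei : i <= tt s by apply: leq_trans (ltnW Hij) Ej');
  by [rewrite -(E _ Ej') -(E _ Ei) | rewrite (E _ Ej') (E _ Ei)].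
apply/eqP; rewrite eqn_leq; apply/andP; split.
  case: (ltnP (tt s) n) => H.
    by apply: tt_min; rewrite Eb // tt_bad.
  by apply: leq_trans (tt_le _) H.
rewrite leqNgt; apply/negP => H.
have H1 : tt s' < n by apply: leq_trans H (tt_le _).
have := tt_bad H1; rewrite Eb ?(ltnW H) // => /tt_min; lia.
Qed.

Definition rv (l r : nat) (j : 'I_n) : 'I_n :=
  if [&& l <= j, j <= r & r < n] then insubd j (l + r - j) else j.

Lemma val_rv l r j : val (rv l r j) = if [&& l <= j, j <= r & r < n] then l + r - j else j.
Proof.
rewrite /rv; case: ifP => // /and3P [H1 H2 H3].
by rewrite val_insubd ifT //; lia.
Qed.

Lemma rvK l r : involutive (rv l r).
Proof.
move=> j; apply: val_inj; rewrite !val_rv.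
case: (boolP [&& l <= j, j <= r & r < n]) => /= H.
  move/and3P: H => [H1 H2 H3]; rewrite ifT; first lia.
  apply/and3P; split; lia.
by rewrite (negbTE H).
Qed.

Definition rvp l r : 'S_n := perm (can_inj (rvK l r)).

Definition phi (a b : nat) (s : 'S_n) : 'S_n := rvp (tt s + 1 + a) (n - 1 - b) * s.

Lemma phiE a b s j : phi a b s j = s (rv (tt s + 1 + a) (n - 1 - b) j).
Proof. by rewrite /phi permM permE. Qed.

Lemma tt_phi a b s : tt (phi a b s) = tt s.
Proof.
apply: tt_prefix => j Hj; rewrite phiE; congr (s _); apply: val_inj.
rewrite val_rv ifF //; apply/negbTE; rewrite negb_and; apply/orP; left; lia.
Qed.

Lemma phiK a b : involutive (phi a b).
Proof.
move=> s; apply/permP => j; rewrite !phiE tt_phi rvK //.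
Qed.

Lemma count_eq k l (p : pop k) (q : pop l) a b :
  (forall s, contains p s = contains q (phi a b s)) ->
  num_avoiders p n = num_avoiders q n.
Proof.
move=> H; rewrite /num_avoiders.
rewrite -(card_preimset _ (can_inj (phiK a b))).
apply: eq_card => s; by rewrite !inE /avoids H (phiK a b s).
Qed.


Definition Q2 (c : 'I_n -> 'I_n -> bool) (m : nat) :=
  [exists j : 'I_n, exists k : 'I_n, [&& m < j, j < k & c j k]].
Definition Q3 (c : 'I_n -> 'I_n -> 'I_n -> bool) (m : nat) :=
  [exists j1 : 'I_n, exists j2 : 'I_n, exists j3 : 'I_n, [&& m < j1, j1 < j2, j2 < j3 & c j1 j2 j3]].

Lemma containsP k (p : pop k) (s : 'S_n) : contains p s <->
  exists g : 'I_k -> 'I_n, (forall j m : 'I_k, j < m -> g j < g m) /\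
                           (forall j m, p j m -> s (g j) < s (g m)).
Proof.
split.
  move=> /existsP [f /forallP H]; exists f; split => j m.
    by move: (forallP (H j) m) => /andP [/implyP h _].
  by move: (forallP (H j) m) => /andP [_ /implyP h].
move=> [g [H1 H2]]; apply/existsP; exists (finfun g); apply/forallP => j.
apply/forallP => m; rewrite !ffunE; apply/andP; split; apply/implyP.
  exact: H1.
exact: H2.
Qed.

Definition o4 (i : nat) (H : i < 4) : 'I_4 := Ordinal H.
Definition o5 (i : nat) (H : i < 5) : 'I_5 := Ordinal H.


Lemma c1234 (s : 'S_n) : contains (pop4 1 2 3 4) s <->
  exists i1 i2 : 'I_n, [&& i1 < i2, s i2 < s i1 & Q2 (fun j k => s k < s j) i2].
Proof.
split.
  move=> /containsP [g [Hm Hp]].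
  have h01 := Hm (@o4 0 isT) (@o4 1 isT) isT.
  have h12 := Hm (@o4 1 isT) (@o4 2 isT) isT.
  have h23 := Hm (@o4 2 isT) (@o4 3 isT) isT.
  have p10 := Hp (@o4 1 isT) (@o4 0 isT) isT.
  have pc := Hp (@o4 3 isT) (@o4 2 isT) isT.
  exists (g (@o4 0 isT)), (g (@o4 1 isT)); rewrite h01 p10 /=.
  apply/existsP; exists (g (@o4 2 isT)); apply/existsP; exists (g (@o4 3 isT)).
  by rewrite h12 h23 pc.
  move=> [i1 [i2 /and3P [hi hs /existsP [j /existsP [k /and3P [hj hk hc]]]]]].
  apply/containsP; exists (fun x : 'I_4 => nth i1 [:: i1; i2; j; k] x); split.
    case=> [[|[|[|[|?]]]] ?] [[|[|[|[|?]]]] ?] //= _; lia.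
  case=> [[|[|[|[|?]]]] ?] [[|[|[|[|?]]]] ?] //=; rewrite /pop4 /pop_of !inE //=.
Qed.

Lemma c1243 (s : 'S_n) : contains (pop4 1 2 4 3) s <->
  exists i1 i2 : 'I_n, [&& i1 < i2, s i2 < s i1 & Q2 (fun j k => s j < s k) i2].
Proof.
split.
  move=> /containsP [g [Hm Hp]].
  have h01 := Hm (@o4 0 isT) (@o4 1 isT) isT.
  have h12 := Hm (@o4 1 isT) (@o4 2 isT) isT.
  have h23 := Hm (@o4 2 isT) (@o4 3 isT) isT.
  have p10 := Hp (@o4 1 isT) (@o4 0 isT) isT.
  have pc := Hp (@o4 2 isT) (@o4 3 isT) isT.
  exists (g (@o4 0 isT)), (g (@o4 1 isT)); rewrite h01 p10 /=.
  apply/existsP; exists (g (@o4 2 isT)); apply/existsP; exists (g (@o4 3 isT)).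
  by rewrite h12 h23 pc.
  move=> [i1 [i2 /and3P [hi hs /existsP [j /existsP [k /and3P [hj hk hc]]]]]].
  apply/containsP; exists (fun x : 'I_4 => nth i1 [:: i1; i2; j; k] x); split.
    case=> [[|[|[|[|?]]]] ?] [[|[|[|[|?]]]] ?] //= _; lia.
  case=> [[|[|[|[|?]]]] ?] [[|[|[|[|?]]]] ?] //=; rewrite /pop4 /pop_of !inE //=.
Qed.

Lemma c12345 (s : 'S_n) : contains (pop5 1 2 3 4 5) s <->
  exists i1 i2 : 'I_n, [&& i1 < i2, s i2 < s i1 & Q3 (fun j1 j2 j3 => s j2 < s j1) i2].
Proof.
split.
  move=> /containsP [g [Hm Hp]].
  have h01 := Hm (@o5 0 isT) (@o5 1 isT) isT.
  have h12 := Hm (@o5 1 isT) (@o5 2 isT) isT.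
  have h23 := Hm (@o5 2 isT) (@o5 3 isT) isT.
  have h34 := Hm (@o5 3 isT) (@o5 4 isT) isT.
  have p10 := Hp (@o5 1 isT) (@o5 0 isT) isT.
  have pc := Hp (@o5 3 isT) (@o5 2 isT) isT.
  exists (g (@o5 0 isT)), (g (@o5 1 isT)); rewrite h01 p10 /=.
  apply/existsP; exists (g (@o5 2 isT)); apply/existsP; exists (g (@o5 3 isT)).
  apply/existsP; exists (g (@o5 4 isT)).
  by rewrite h12 h23 h34 pc.
  move=> [i1 [i2 /and3P [hi hs /existsP [j1 /existsP [j2 /existsP [j3 /and4P [hj hk hl hc]]]]]]].
  apply/containsP; exists (fun x : 'I_5 => nth i1 [:: i1; i2; j1; j2; j3] x); split.
    case=> [[|[|[|[|[|?]]]]] ?] [[|[|[|[|[|?]]]]] ?] //= _; lia.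
  case=> [[|[|[|[|[|?]]]]] ?] [[|[|[|[|[|?]]]]] ?] //=; rewrite /pop5 /pop_of !inE //=.
Qed.

Lemma c12435 (s : 'S_n) : contains (pop5 1 2 4 3 5) s <->
  exists i1 i2 : 'I_n, [&& i1 < i2, s i2 < s i1 & Q3 (fun j1 j2 j3 => s j1 < s j2) i2].
Proof.
split.
  move=> /containsP [g [Hm Hp]].
  have h01 := Hm (@o5 0 isT) (@o5 1 isT) isT.
  have h12 := Hm (@o5 1 isT) (@o5 2 isT) isT.
  have h23 := Hm (@o5 2 isT) (@o5 3 isT) isT.
  have h34 := Hm (@o5 3 isT) (@o5 4 isT) isT.
  have p10 := Hp (@o5 1 isT) (@o5 0 isT) isT.
  have pc := Hp (@o5 2 isT) (@o5 3 isT) isT.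
  exists (g (@o5 0 isT)), (g (@o5 1 isT)); rewrite h01 p10 /=.
  apply/existsP; exists (g (@o5 2 isT)); apply/existsP; exists (g (@o5 3 isT)).
  apply/existsP; exists (g (@o5 4 isT)).
  by rewrite h12 h23 h34 pc.
  move=> [i1 [i2 /and3P [hi hs /existsP [j1 /existsP [j2 /existsP [j3 /and4P [hj hk hl hc]]]]]]].
  apply/containsP; exists (fun x : 'I_5 => nth i1 [:: i1; i2; j1; j2; j3] x); split.
    case=> [[|[|[|[|[|?]]]]] ?] [[|[|[|[|[|?]]]]] ?] //= _; lia.
  case=> [[|[|[|[|[|?]]]]] ?] [[|[|[|[|[|?]]]]] ?] //=; rewrite /pop5 /pop_of !inE //=.
Qed.

Lemma c12453 (s : 'S_n) : contains (pop5 1 2 4 5 3) s <->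
  exists i1 i2 : 'I_n, [&& i1 < i2, s i2 < s i1 & Q3 (fun j1 j2 j3 => s j3 < s j2) i2].
Proof.
split.
  move=> /containsP [g [Hm Hp]].
  have h01 := Hm (@o5 0 isT) (@o5 1 isT) isT.
  have h12 := Hm (@o5 1 isT) (@o5 2 isT) isT.
  have h23 := Hm (@o5 2 isT) (@o5 3 isT) isT.
  have h34 := Hm (@o5 3 isT) (@o5 4 isT) isT.
  have p10 := Hp (@o5 1 isT) (@o5 0 isT) isT.
  have pc := Hp (@o5 4 isT) (@o5 3 isT) isT.
  exists (g (@o5 0 isT)), (g (@o5 1 isT)); rewrite h01 p10 /=.
  apply/existsP; exists (g (@o5 2 isT)); apply/existsP; exists (g (@o5 3 isT)).
  apply/existsP; exists (g (@o5 4 isT)).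
  by rewrite h12 h23 h34 pc.
  move=> [i1 [i2 /and3P [hi hs /existsP [j1 /existsP [j2 /existsP [j3 /and4P [hj hk hl hc]]]]]]].
  apply/containsP; exists (fun x : 'I_5 => nth i1 [:: i1; i2; j1; j2; j3] x); split.
    case=> [[|[|[|[|[|?]]]]] ?] [[|[|[|[|[|?]]]]] ?] //= _; lia.
  case=> [[|[|[|[|[|?]]]]] ?] [[|[|[|[|[|?]]]]] ?] //=; rewrite /pop5 /pop_of !inE //=.
Qed.

Lemma c12543 (s : 'S_n) : contains (pop5 1 2 5 4 3) s <->
  exists i1 i2 : 'I_n, [&& i1 < i2, s i2 < s i1 & Q3 (fun j1 j2 j3 => s j2 < s j3) i2].
Proof.
split.
  move=> /containsP [g [Hm Hp]].
  have h01 := Hm (@o5 0 isT) (@o5 1 isT) isT.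
  have h12 := Hm (@o5 1 isT) (@o5 2 isT) isT.
  have h23 := Hm (@o5 2 isT) (@o5 3 isT) isT.
  have h34 := Hm (@o5 3 isT) (@o5 4 isT) isT.
  have p10 := Hp (@o5 1 isT) (@o5 0 isT) isT.
  have pc := Hp (@o5 3 isT) (@o5 4 isT) isT.
  exists (g (@o5 0 isT)), (g (@o5 1 isT)); rewrite h01 p10 /=.
  apply/existsP; exists (g (@o5 2 isT)); apply/existsP; exists (g (@o5 3 isT)).
  apply/existsP; exists (g (@o5 4 isT)).
  by rewrite h12 h23 h34 pc.
  move=> [i1 [i2 /and3P [hi hs /existsP [j1 /existsP [j2 /existsP [j3 /and4P [hj hk hl hc]]]]]]].
  apply/containsP; exists (fun x : 'I_5 => nth i1 [:: i1; i2; j1; j2; j3] x); split.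
    case=> [[|[|[|[|[|?]]]]] ?] [[|[|[|[|[|?]]]]] ?] //= _; lia.
  case=> [[|[|[|[|[|?]]]]] ?] [[|[|[|[|[|?]]]]] ?] //=; rewrite /pop5 /pop_of !inE //=.
Qed.

Lemma c12354 (s : 'S_n) : contains (pop5 1 2 3 5 4) s <->
  exists i1 i2 : 'I_n, [&& i1 < i2, s i2 < s i1 & Q3 (fun j1 j2 j3 => s j3 < s j1) i2].
Proof.
split.
  move=> /containsP [g [Hm Hp]].
  have h01 := Hm (@o5 0 isT) (@o5 1 isT) isT.
  have h12 := Hm (@o5 1 isT) (@o5 2 isT) isT.
  have h23 := Hm (@o5 2 isT) (@o5 3 isT) isT.
  have h34 := Hm (@o5 3 isT) (@o5 4 isT) isT.
  have p10 := Hp (@o5 1 isT) (@o5 0 isT) isT.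
  have pc := Hp (@o5 4 isT) (@o5 2 isT) isT.
  exists (g (@o5 0 isT)), (g (@o5 1 isT)); rewrite h01 p10 /=.
  apply/existsP; exists (g (@o5 2 isT)); apply/existsP; exists (g (@o5 3 isT)).
  apply/existsP; exists (g (@o5 4 isT)).
  by rewrite h12 h23 h34 pc.
  move=> [i1 [i2 /and3P [hi hs /existsP [j1 /existsP [j2 /existsP [j3 /and4P [hj hk hl hc]]]]]]].
  apply/containsP; exists (fun x : 'I_5 => nth i1 [:: i1; i2; j1; j2; j3] x); split.
    case=> [[|[|[|[|[|?]]]]] ?] [[|[|[|[|[|?]]]]] ?] //= _; lia.
  case=> [[|[|[|[|[|?]]]]] ?] [[|[|[|[|[|?]]]]] ?] //=; rewrite /pop5 /pop_of !inE //=.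
Qed.

Lemma c12534 (s : 'S_n) : contains (pop5 1 2 5 3 4) s <->
  exists i1 i2 : 'I_n, [&& i1 < i2, s i2 < s i1 & Q3 (fun j1 j2 j3 => s j1 < s j3) i2].
Proof.
split.
  move=> /containsP [g [Hm Hp]].
  have h01 := Hm (@o5 0 isT) (@o5 1 isT) isT.
  have h12 := Hm (@o5 1 isT) (@o5 2 isT) isT.
  have h23 := Hm (@o5 2 isT) (@o5 3 isT) isT.
  have h34 := Hm (@o5 3 isT) (@o5 4 isT) isT.
  have p10 := Hp (@o5 1 isT) (@o5 0 isT) isT.
  have pc := Hp (@o5 2 isT) (@o5 4 isT) isT.
  exists (g (@o5 0 isT)), (g (@o5 1 isT)); rewrite h01 p10 /=.
  apply/existsP; exists (g (@o5 2 isT)); apply/existsP; exists (g (@o5 3 isT)).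
  apply/existsP; exists (g (@o5 4 isT)).
  by rewrite h12 h23 h34 pc.
  move=> [i1 [i2 /and3P [hi hs /existsP [j1 /existsP [j2 /existsP [j3 /and4P [hj hk hl hc]]]]]]].
  apply/containsP; exists (fun x : 'I_5 => nth i1 [:: i1; i2; j1; j2; j3] x); split.
    case=> [[|[|[|[|[|?]]]]] ?] [[|[|[|[|[|?]]]]] ?] //= _; lia.
  case=> [[|[|[|[|[|?]]]]] ?] [[|[|[|[|[|?]]]]] ?] //=; rewrite /pop5 /pop_of !inE //=.
Qed.


Definition anti (Q : nat -> bool) := forall m m', m' <= m -> Q m -> Q m'.

Lemma antiQ2 c : anti (Q2 c).
Proof.
move=> m m' hm /existsP [j /existsP [k /and3P [h1 h2 h3]]].
apply/existsP; exists j; apply/existsP; exists k; rewrite h2 h3 andbT; lia.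
Qed.

Lemma antiQ3 c : anti (Q3 c).
Proof.
move=> m m' hm /existsP [j /existsP [k /existsP [l /and4P [h1 h2 h3 h4]]]].
apply/existsP; exists j; apply/existsP; exists k; apply/existsP; exists l.
rewrite h2 h3 h4 !andbT; lia.
Qed.

Lemma stepA (s : 'S_n) (Q : nat -> bool) : anti Q ->
 (exists i1 i2 : 'I_n, [&& i1 < i2, s i2 < s i1 & Q i2]) <-> (tt s < n /\ Q (tt s)).
Proof.
move=> HQ; split.
  move=> [i1 [i2 /and3P [h1 h2 h3]]].
  have hb : bad s i2 by apply/existsP; exists i1; apply/existsP; exists i2; rewrite eqxx h1 h2.
  have ht := tt_min hb; split; first exact: leq_ltn_trans ht (ltn_ord i2).
  exact: HQ ht h3.
move=> [ht hq]; move: (tt_bad ht) => /existsP [i1 /existsP [i2 /and3P [/eqP e h1 h2]]].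
by exists i1, i2; rewrite h1 h2 e hq.
Qed.

Lemma combine k l (p : pop k) (q : pop l) (Qp Qq : 'S_n -> nat -> bool) a b :
 (forall s, contains p s <-> exists i1 i2 : 'I_n, [&& i1 < i2, s i2 < s i1 & Qp s i2]) ->
 (forall s, contains q s <-> exists i1 i2 : 'I_n, [&& i1 < i2, s i2 < s i1 & Qq s i2]) ->
 (forall s, anti (Qp s)) -> (forall s, anti (Qq s)) ->
 (forall s, tt s < n -> Qp s (tt s) -> Qq (phi a b s) (tt s)) ->
 (forall s, tt s < n -> Qq s (tt s) -> Qp (phi a b s) (tt s)) ->
 forall s, contains p s = contains q (phi a b s).
Proof.
move=> Hp Hq Ap Aq F1 F2 s; apply/idP/idP => H.
  move/(Hp s)/(stepA s (Ap s)): H => [ht hq].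
  apply/(Hq _)/(stepA _ (Aq _)); rewrite tt_phi; split=> //; exact: F1.
move/(Hq _)/(stepA _ (Aq _)): H; rewrite tt_phi => -[ht hq].
have := F2 (phi a b s); rewrite tt_phi phiK => F.
apply/(Hp s)/(stepA s (Ap s)); split=> //; exact: F.
Qed.

Lemma rv_in l r (x : 'I_n) : l <= x -> x <= r -> r < n -> val (rv l r x) = l + r - x.
Proof. by move=> h1 h2 h3; rewrite val_rv h1 h2 h3. Qed.

Lemma vins (x : 'I_n) m : m < n -> val (insubd x m) = m.
Proof. by move=> h; rewrite val_insubd h. Qed.

End Frame.
Section Rev.
Variable n : nat.

Lemma rev_i_1 (s : 'S_n) : tt s < n ->
  Q2 (fun j k => s k < s j) (tt s) -> Q2 (fun j k => (phi 0 0 s) j < (phi 0 0 s) k) (tt s).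
Proof.
move=> ht /existsP [j /existsP [k /and3P [hj hk hc]]].
have := ltn_ord j; have := ltn_ord k => oj ok.
apply/existsP; exists (rv (tt s + 1 + 0) (n - 1 - 0) k).
apply/existsP; exists (rv (tt s + 1 + 0) (n - 1 - 0) j).
rewrite !phiE !rvK hc !andbT !rv_in ?vins; lia.
Qed.

Lemma rev_i_2 (s : 'S_n) : tt s < n ->
  Q2 (fun j k => s j < s k) (tt s) -> Q2 (fun j k => (phi 0 0 s) k < (phi 0 0 s) j) (tt s).
Proof.
move=> ht /existsP [j /existsP [k /and3P [hj hk hc]]].
have := ltn_ord j; have := ltn_ord k => oj ok.
apply/existsP; exists (rv (tt s + 1 + 0) (n - 1 - 0) k).
apply/existsP; exists (rv (tt s + 1 + 0) (n - 1 - 0) j).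
rewrite !phiE !rvK hc !andbT !rv_in ?vins; lia.
Qed.

Lemma rev_iia_1 (s : 'S_n) : tt s < n ->
  Q3 (fun j1 j2 j3 => s j2 < s j1) (tt s) -> Q3 (fun j1 j2 j3 => (phi 0 1 s) j1 < (phi 0 1 s) j2) (tt s).
Proof.
move=> ht /existsP [j1 /existsP [j2 /existsP [j3 /and4P [h1 h2 h3 hc]]]].
have := ltn_ord j1; have := ltn_ord j2; have := ltn_ord j3 => o3 o2 o1.
apply/existsP; exists (rv (tt s + 1 + 0) (n - 1 - 1) j2).
apply/existsP; exists (rv (tt s + 1 + 0) (n - 1 - 1) j1).
apply/existsP; exists (insubd j3 n.-1).
rewrite !phiE !rvK hc !andbT !rv_in ?vins; lia.
Qed.

Lemma rev_iia_2 (s : 'S_n) : tt s < n ->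
  Q3 (fun j1 j2 j3 => s j1 < s j2) (tt s) -> Q3 (fun j1 j2 j3 => (phi 0 1 s) j2 < (phi 0 1 s) j1) (tt s).
Proof.
move=> ht /existsP [j1 /existsP [j2 /existsP [j3 /and4P [h1 h2 h3 hc]]]].
have := ltn_ord j1; have := ltn_ord j2; have := ltn_ord j3 => o3 o2 o1.
apply/existsP; exists (rv (tt s + 1 + 0) (n - 1 - 1) j2).
apply/existsP; exists (rv (tt s + 1 + 0) (n - 1 - 1) j1).
apply/existsP; exists (insubd j3 n.-1).
rewrite !phiE !rvK hc !andbT !rv_in ?vins; lia.
Qed.

Lemma rev_iib_1 (s : 'S_n) : tt s < n ->
  Q3 (fun j1 j2 j3 => s j1 < s j2) (tt s) -> Q3 (fun j1 j2 j3 => (phi 0 0 s) j3 < (phi 0 0 s) j2) (tt s).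
Proof.
move=> ht /existsP [j1 /existsP [j2 /existsP [j3 /and4P [h1 h2 h3 hc]]]].
have := ltn_ord j1; have := ltn_ord j2; have := ltn_ord j3 => o3 o2 o1.
apply/existsP; exists (rv (tt s + 1 + 0) (n - 1 - 0) j3).
apply/existsP; exists (rv (tt s + 1 + 0) (n - 1 - 0) j2).
apply/existsP; exists (rv (tt s + 1 + 0) (n - 1 - 0) j1).
rewrite !phiE !rvK hc !andbT !rv_in ?vins; lia.
Qed.

Lemma rev_iib_2 (s : 'S_n) : tt s < n ->
  Q3 (fun j1 j2 j3 => s j3 < s j2) (tt s) -> Q3 (fun j1 j2 j3 => (phi 0 0 s) j1 < (phi 0 0 s) j2) (tt s).
Proof.
move=> ht /existsP [j1 /existsP [j2 /existsP [j3 /and4P [h1 h2 h3 hc]]]].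
have := ltn_ord j1; have := ltn_ord j2; have := ltn_ord j3 => o3 o2 o1.
apply/existsP; exists (rv (tt s + 1 + 0) (n - 1 - 0) j3).
apply/existsP; exists (rv (tt s + 1 + 0) (n - 1 - 0) j2).
apply/existsP; exists (rv (tt s + 1 + 0) (n - 1 - 0) j1).
rewrite !phiE !rvK hc !andbT !rv_in ?vins; lia.
Qed.

Lemma rev_iic_1 (s : 'S_n) : tt s < n ->
  Q3 (fun j1 j2 j3 => s j3 < s j2) (tt s) -> Q3 (fun j1 j2 j3 => (phi 1 0 s) j2 < (phi 1 0 s) j3) (tt s).
Proof.
move=> ht /existsP [j1 /existsP [j2 /existsP [j3 /and4P [h1 h2 h3 hc]]]].
have := ltn_ord j1; have := ltn_ord j2; have := ltn_ord j3 => o3 o2 o1.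
apply/existsP; exists (insubd j1 (tt s).+1).
apply/existsP; exists (rv (tt s + 1 + 1) (n - 1 - 0) j3).
apply/existsP; exists (rv (tt s + 1 + 1) (n - 1 - 0) j2).
rewrite !phiE !rvK hc !andbT !rv_in ?vins; lia.
Qed.

Lemma rev_iic_2 (s : 'S_n) : tt s < n ->
  Q3 (fun j1 j2 j3 => s j2 < s j3) (tt s) -> Q3 (fun j1 j2 j3 => (phi 1 0 s) j3 < (phi 1 0 s) j2) (tt s).
Proof.
move=> ht /existsP [j1 /existsP [j2 /existsP [j3 /and4P [h1 h2 h3 hc]]]].
have := ltn_ord j1; have := ltn_ord j2; have := ltn_ord j3 => o3 o2 o1.
apply/existsP; exists (insubd j1 (tt s).+1).
apply/existsP; exists (rv (tt s + 1 + 1) (n - 1 - 0) j3).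
apply/existsP; exists (rv (tt s + 1 + 1) (n - 1 - 0) j2).
rewrite !phiE !rvK hc !andbT !rv_in ?vins; lia.
Qed.

Lemma rev_iii_1 (s : 'S_n) : tt s < n ->
  Q3 (fun j1 j2 j3 => s j3 < s j1) (tt s) -> Q3 (fun j1 j2 j3 => (phi 0 0 s) j1 < (phi 0 0 s) j3) (tt s).
Proof.
move=> ht /existsP [j1 /existsP [j2 /existsP [j3 /and4P [h1 h2 h3 hc]]]].
have := ltn_ord j1; have := ltn_ord j2; have := ltn_ord j3 => o3 o2 o1.
apply/existsP; exists (rv (tt s + 1 + 0) (n - 1 - 0) j3).
apply/existsP; exists (rv (tt s + 1 + 0) (n - 1 - 0) j2).
apply/existsP; exists (rv (tt s + 1 + 0) (n - 1 - 0) j1).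
rewrite !phiE !rvK hc !andbT !rv_in ?vins; lia.
Qed.

Lemma rev_iii_2 (s : 'S_n) : tt s < n ->
  Q3 (fun j1 j2 j3 => s j1 < s j3) (tt s) -> Q3 (fun j1 j2 j3 => (phi 0 0 s) j3 < (phi 0 0 s) j1) (tt s).
Proof.
move=> ht /existsP [j1 /existsP [j2 /existsP [j3 /and4P [h1 h2 h3 hc]]]].
have := ltn_ord j1; have := ltn_ord j2; have := ltn_ord j3 => o3 o2 o1.
apply/existsP; exists (rv (tt s + 1 + 0) (n - 1 - 0) j3).
apply/existsP; exists (rv (tt s + 1 + 0) (n - 1 - 0) j2).
apply/existsP; exists (rv (tt s + 1 + 0) (n - 1 - 0) j1).
rewrite !phiE !rvK hc !andbT !rv_in ?vins; lia.
Qed.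

End Rev.


Theorem mainTheorem13 :
  wilf_equiv (pop4 1 2 3 4) (pop4 1 2 4 3)
  /\ (wilf_equiv (pop5 1 2 3 4 5) (pop5 1 2 4 3 5)
      /\ wilf_equiv (pop5 1 2 4 3 5) (pop5 1 2 4 5 3)
      /\ wilf_equiv (pop5 1 2 4 5 3) (pop5 1 2 5 4 3))
  /\ wilf_equiv (pop5 1 2 3 5 4) (pop5 1 2 5 3 4).
Proof.
split; [|split; [split; [|split]|]].
- move=> n _; apply: (@count_eq n _ _ _ _ 0 0).
  apply: (@combine n _ _ _ _ (fun s => Q2 (fun j k => s k < s j)) (fun s => Q2 (fun j k => s j < s k)) 0 0).
  + exact: c1234.
  + exact: c1243.
  + move=> s; exact: antiQ2.
  + move=> s; exact: antiQ2.
  + exact: rev_i_1.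
  + exact: rev_i_2.
- move=> n _; apply: (@count_eq n _ _ _ _ 0 1).
  apply: (@combine n _ _ _ _ (fun s => Q3 (fun j1 j2 j3 => s j2 < s j1)) (fun s => Q3 (fun j1 j2 j3 => s j1 < s j2)) 0 1).
  + exact: c12345.
  + exact: c12435.
  + move=> s; exact: antiQ3.
  + move=> s; exact: antiQ3.
  + exact: rev_iia_1.
  + exact: rev_iia_2.
- move=> n _; apply: (@count_eq n _ _ _ _ 0 0).
  apply: (@combine n _ _ _ _ (fun s => Q3 (fun j1 j2 j3 => s j1 < s j2)) (fun s => Q3 (fun j1 j2 j3 => s j3 < s j2)) 0 0).
  + exact: c12435.
  + exact: c12453.
  + move=> s; exact: antiQ3.
  + move=> s; exact: antiQ3.
  + exact: rev_iib_1.
  + exact: rev_iib_2.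
- move=> n _; apply: (@count_eq n _ _ _ _ 1 0).
  apply: (@combine n _ _ _ _ (fun s => Q3 (fun j1 j2 j3 => s j3 < s j2)) (fun s => Q3 (fun j1 j2 j3 => s j2 < s j3)) 1 0).
  + exact: c12453.
  + exact: c12543.
  + move=> s; exact: antiQ3.
  + move=> s; exact: antiQ3.
  + exact: rev_iic_1.
  + exact: rev_iic_2.
- move=> n _; apply: (@count_eq n _ _ _ _ 0 0).
  apply: (@combine n _ _ _ _ (fun s => Q3 (fun j1 j2 j3 => s j3 < s j1)) (fun s => Q3 (fun j1 j2 j3 => s j1 < s j3)) 0 0).
  + exact: c12354.
  + exact: c12534.
  + move=> s; exact: antiQ3.
  + move=> s; exact: antiQ3.
  + exact: rev_iii_1.
  + exact: rev_iii_2.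
Qed.
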